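(* Consider a controllability network as in the context, with fixed graph, scheduling, quantization parameters $U_{\max}>0$, $\delta_u>0$, slot duration $\Delta>0$, and a rate bound $\bar R_e$ for a link $e\in E_R$. There is a constant $\kappa_e\ge0$ (depending only on $\bar R_e,\Delta,U_{\max},\delta_u$) such that for every weight vector $\mathbf w_R$ for which $\alpha_{\bar e}\neq0$ for all $\bar e\in E_R$, one has $R_e\le\bar R_e$ if and only if $|\alpha_e|-\kappa_e|\alpha_{\bar e}|\le0$ for all $\bar e\in E_R$; each $\alpha_{\bar e}$ is a polynomial in the entries of $\mathbf w_R$, so that the rate constraint $R_e\le\bar R_e$ is a polynomial constraint in $\mathbf w_R$. The analogous statement holds for links of the observability network (with $Y_{\max},\delta_y$ and $\mathbf w_O$).
   Context: The controllability network is an acyclic directed graph $(V_R,E_R)$ with controller node $v_c$ and actuator node $v_u$, and weight function $W_R:E_R\to\mathbb R$; $\mathbf w_R=(W_R(e))_{e\in E_R}$. For a directed path, its weight is the product of the weights of its edges. Computational model 1: each node sums the data received on incoming links and transmits on each outgoing link the sum multiplied by that link's weight. For a link $e=(v,v')\in E_R$, $\alpha_e$ is the sum of the weights of all directed paths that start at $v_c$ and end with the link $e$. Actuation data are quantized with width $\delta_u$ over the range $[-U_{\max},U_{\max}]$, and each link transmits during a time slot of duration $\Delta$; the data rate of link $e$ is $$R_e=\Delta^{-1}\left\lceil \log_2\left(\frac{2U_{\max}}{\delta_u}\cdot\frac{|\alpha_e|}{\min_{\bar e\in E_R}|\alpha_{\bar e}|}\right)\right\rceil .$$ The observability network $(V_O,E_O)$,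 with sensor node as source, weights $W_O$, $\mathbf w_O$, quantization parameters $\delta_y$, $Y_{\max}$, and quantities $\alpha_e,R_e$ for $e\in E_O$, is defined analogously. *)

(* Defs.v *)
From mathcomp Require Import all_boot all_order all_algebra.
From mathcomp Require Import all_classical all_reals all_analysis.
From mathcomp Require mpoly.
Set Implicit Arguments. Unset Strict Implicit. Unset Printing Implicit Defensive.
Import Order.TTheory GRing.Theory Num.Theory.
Local Open Scope ring_scope.

Fixpoint consecutive (V E : finType) (src tgt : E -> V) (e : E) (p : seq E)
  : bool :=
  if p is e' :: p' then (tgt e == src e') && consecutive src tgt e' p'
  else true.

Definition acyclic (V E : finType) (src tgt : E -> V) : Prop :=
  forall (e : E) (p : seq E),
    consecutive src tgt e p -> tgt (last e p) != src e.

Definition path_from_to (V E : finType) (src tgt : E -> V) (v : V) (e : E)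
  (e0 : E) (p : seq E) : bool :=
  [&& src e0 == v, consecutive src tgt e0 p & last e0 p == e].

Definition path_weight (R : pzRingType) (E : finType) (w : E -> R)
  (e0 : E) (p : seq E) : R :=
  w e0 * \prod_(x <- p) w x.

(* In an acyclic graph a directed path visits pairwise
   distinct nodes, hence has at most #|V| - 1 links, so its tail has fewer
   than #|V| links; the sum over tails of length k < #|V| therefore ranges
   over all such paths (each exactly once). *)
Definition alpha (R : pzRingType) (V E : finType) (src tgt : E -> V) (v : V)
  (w : E -> R) (e : E) : R :=
  \sum_(k < #|V|) \sum_(e0 : E) \sum_(p : k.-tuple E | path_from_to src tgt v e e0 p)
     path_weight w e0 p.

Definition log2 (R : realType) (x : R) : R := ln x / ln 2.

Definition rate (R : realType) (V E : finType) (src tgt : E -> V) (v : V)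
  (w : E -> R) (Umax delta Delta : R) (e : E) : R :=
  let a := alpha src tgt v w in
  let amin := \big[Order.min/`|a e|]_(e' : E) `|a e'| in
  Delta^-1 * (Num.ceil (log2 ((2 * Umax / delta) * (`|a e| / amin))))%:~R.

(* Main.v *)
Require Import Defs.
From mathcomp Require Import all_boot all_order all_algebra.
From mathcomp Require Import reals sequences exp.
From mathcomp Require Import mpoly.
From mathcomp Require Import ring.
Import Order.TTheory GRing.Theory Num.Theory.
Local Open Scope ring_scope.

Lemma rate_iff (R : realType) (Rbar Delta Umax delta : R) (V E : finType)
  (src tgt : E -> V) (vc : V) (e : E) (w : E -> R) :
  0 < Delta -> 0 < Umax -> 0 < delta ->
  (forall e' : E, alpha src tgt vc w e' != 0) ->
  (rate src tgt vc w Umax delta Delta e <= Rbar <->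
   forall e' : E, `|alpha src tgt vc w e| -
     (expR ((Num.floor (Delta * Rbar))%:~R * ln 2) * delta / (2 * Umax))
       * `|alpha src tgt vc w e'| <= 0).
Proof.
move=> D0 U0 d0 nz.
rewrite /rate.
set a := alpha src tgt vc w.
set amin := \big[Order.min/`|a e|]_(e' : E) `|a e'|.
set n := Num.floor (Delta * Rbar).
set K := expR (n%:~R * ln 2).
have ap : forall e', 0 < `|a e'| by move=> e'; rewrite normr_gt0 nz.
have am0 : 0 < amin.
  apply/bigmin_gtP; split => // i _; exact: ap.
have ln2 : 0 < ln (2 : R) by apply: ln_gt0; rewrite ltr1n.
have K0 : 0 < K by apply: expR_gt0.
set c := 2 * Umax / delta.
have c0 : 0 < c by rewrite /c !mulr_gt0 ?invr_gt0.
set kappa := K * delta / (2 * Umax).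
have k0 : 0 < kappa by rewrite /kappa divr_gt0 // mulr_gt0.
set X := c * (`|a e| / amin).
have X0 : 0 < X by rewrite /X !mulr_gt0 ?invr_gt0 ?ap.
rewrite ler_pdivrMl // -floor_ge_int ceil_le_int /log2 ler_pdivrMr //.
rewrite -ler_expR lnK ?posrE //.
have -> : (X <= K) = (`|a e| <= kappa * amin).
  rewrite -subr_le0 -[in RHS]subr_le0.
  have -> : X - K = (c / amin) * (`|a e| - kappa * amin).
    rewrite /X /c /kappa; field.
    by rewrite !gt_eqF.
  by rewrite pmulr_rle0 // divr_gt0.
rewrite -ler_pdivrMl //.
split.
  move/bigmin_geP => [_ H] e'; rewrite subr_le0 -ler_pdivrMl //; exact: H.
move=> H; apply/bigmin_geP; split => [|i _].
  by rewrite ler_pdivrMl // -subr_le0.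
by rewrite ler_pdivrMl // -subr_le0.
Qed.

Theorem proposition4 (R : realType) :
  exists kappa : R -> R -> R -> R -> R,
  forall (Rbar Delta Umax delta : R),
    0 < Delta -> 0 < Umax -> 0 < delta ->
    0 <= kappa Rbar Delta Umax delta /\
    forall (V E : finType) (src tgt : E -> V) (vc : V),
      acyclic src tgt ->
      forall e : E,
        (forall w : E -> R,
           (forall e' : E, alpha src tgt vc w e' != 0) ->
           (rate src tgt vc w Umax delta Delta e <= Rbar <->
            forall e' : E,
              `|alpha src tgt vc w e| - kappa Rbar Delta Umax delta * `|alpha src tgt vc w e'| <= 0))
        /\
        (forall e' : E, exists P : mpoly.mpoly #|E| R,
           forall w : E -> R,
             alpha src tgt vc w e' = mpoly.meval (fun i : 'I_#|E| => w (enum_val i)) P).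
Proof.
exists (fun Rbar Delta Umax delta =>
  expR ((Num.floor (Delta * Rbar))%:~R * ln 2) * delta / (2 * Umax)).
move=> Rbar Delta Umax delta D0 U0 d0; split.
  by rewrite ltW // divr_gt0 ?mulr_gt0 ?expR_gt0.
move=> V E src tgt vc _ e; split.
  by move=> w nz; apply: rate_iff.
move=> e'.
pose X (x : E) : mpoly.mpoly #|E| R := mpoly.mpolyX R (mpoly.mnm1 (enum_rank x)).
exists (\sum_(k < #|V|) \sum_(e0 : E)
   \sum_(p : k.-tuple E | path_from_to src tgt vc e' e0 p)
     (X e0 * \prod_(x <- p) X x : mpoly.mpoly #|E| R)%R).
move=> w.
have hX : forall x, mpoly.meval (fun i : 'I_#|E| => w (enum_val i)) (X x) = w x.
  by move=> x; rewrite /X mpoly.mevalXU enum_rankK.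
rewrite /alpha (big_morph _ (mpoly.mevalD _) (mpoly.meval0 _)).
apply: eq_bigr => k _.
rewrite (big_morph _ (mpoly.mevalD _) (mpoly.meval0 _)).
apply: eq_bigr => e0 _.
rewrite (big_morph _ (mpoly.mevalD _) (mpoly.meval0 _)).
apply: eq_bigr => p _.
rewrite mpoly.mevalM hX (big_morph _ (mpoly.mevalM _) (mpoly.meval1 _)).
rewrite /path_weight; congr (_ * _); apply: eq_bigr => x _; by rewrite hX.
Qed.
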